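(* Let $G$ be a finite vertex-transitive simple graph, let $v$ be any vertex of $G$, and let $P$ be a solvable pebble distribution on $G$. Then $$|P|\geq \frac{|V(G)|+\mathrm{TE}(P)}{\mathrm{ef}(v)}.$$
   Context: A pebble distribution on $G$ is a function $P:V(G)\to\mathbb{Z}_{\geq 0}$ with size $|P|=\sum_v P(v)$. A pebbling move from a vertex $u$ with at least two pebbles to an adjacent vertex removes two pebbles from $u$ and adds one to the neighbor. A vertex $w$ is $k$-reachable under $P$ if some executable sequence of pebbling moves yields at least $k$ pebbles on $w$; reachable means $1$-reachable; $P$ is solvable if all vertices are reachable. $\mathrm{reach}(P,w)$ is the largest such $k$. The excess $\mathrm{exc}(P,w)$ is $\mathrm{reach}(P,w)-1$ if $w$ is reachable and $0$ otherwise, and $\mathrm{TE}(P)=\sum_{w}\mathrm{exc}(P,w)$. With $N_i(v)$ the set of vertices at distance exactly $i$ from $v$, $\mathrm{ef}(v)=\sum_{i\geq 0}(1/2)^i|N_i(v)|$ (independent of $v$ for vertex-transitive $G$). *)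

(* Defs.v *)
From Stdlib Require Import ClassicalEpsilon Relation_Operators.
From mathcomp Require Import all_boot all_order all_algebra all_fingroup.
Set Implicit Arguments. Unset Strict Implicit. Unset Printing Implicit Defensive.
Import Order.TTheory GRing.Theory Num.Theory.

Definition simple_graph (T : finType) (e : rel T) : Prop :=
  symmetric e /\ irreflexive e.

Definition vertex_transitive (T : finType) (e : rel T) : Prop :=
  forall u v : T, exists f : {perm T},
    (forall x y, e (f x) (f y) = e x y) /\ f u = v.

Fixpoint walkn (T : finType) (e : rel T) (k : nat) (v w : T) : bool :=
  match k with
  | 0 => v == w
  | k'.+1 => [exists u, e v u && walkn e k' u w]
  end.

Definition dist_le (T : finType) (e : rel T) (v w : T) (i : nat) : bool :=
  [exists j : 'I_i.+1, walkn e j v w].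

Definition Nset (T : finType) (e : rel T) (v : T) (i : nat) : {set T} :=
  [set w | dist_le e v w i & (if i is i'.+1 then ~~ dist_le e v w i' else true)].

(* ef(v) = sum_{i>=0} (1/2)^i |N_i(v)|; every finite distance is < #|T|,
   so N_i(v) is empty for i >= #|T| and the sum is truncated there. *)
Definition ef (T : finType) (e : rel T) (v : T) : rat :=
  (\sum_(i < #|T|) (2%:R ^- i) * #|Nset e v i|%:R)%R.

Definition pdist (T : finType) := {ffun T -> nat}.

Definition psize (T : finType) (P : pdist T) : nat := \sum_v P v.

Definition pmove (T : finType) (e : rel T) (P Q : pdist T) : Prop :=
  exists u w, [/\ e u w, 2 <= P u &
    Q = [ffun x => if x == u then P x - 2
                   else if x == w then (P x).+1 else P x]].

Definition preaches (T : finType) (e : rel T) : pdist T -> pdist T -> Prop :=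
  clos_refl_trans (pdist T) (@pmove T e).

Definition kreachable (T : finType) (e : rel T) (P : pdist T) (w : T) (k : nat)
  : Prop := exists Q, preaches e P Q /\ k <= Q w.

Definition reachable (T : finType) (e : rel T) (P : pdist T) (w : T) : Prop :=
  kreachable e P w 1.

Definition solvable (T : finType) (e : rel T) (P : pdist T) : Prop :=
  forall w, reachable e P w.

Definition pdec (A : Prop) : bool :=
  if excluded_middle_informative A then true else false.

(* reach(P,w): the largest k such that w is k-reachable. Pebbling moves never
   increase the number of pebbles, so such k are <= |P|. *)
Definition reach (T : finType) (e : rel T) (P : pdist T) (w : T) : nat :=
  \max_(k < (psize P).+1 | pdec (kreachable e P w k)) k.

Definition exc (T : finType) (e : rel T) (P : pdist T) (w : T) : nat :=
  if pdec (reachable e P w) then (reach e P w).-1 else 0.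

Definition TE (T : finType) (e : rel T) (P : pdist T) : nat :=
  \sum_w exc e P w.

(* Main.v *)
Require Import Defs.
From Stdlib Require Import ClassicalEpsilon Relation_Operators.
From mathcomp Require Import all_boot all_order all_algebra all_fingroup.
Import Order.TTheory GRing.Theory Num.Theory.
Set Implicit Arguments. Unset Strict Implicit.
From mathcomp Require Import lra.

Lemma walknP (T : finType) (e : rel T) k a b :
  reflect (exists p, [/\ path e a p, last a p = b & size p = k]) (walkn e k a b).
Proof.
elim: k a => [|k IH] a /=.
  apply: (iffP eqP) => [->|[p [_ <- /eqP]]]; first by exists [::].
  by rewrite size_eq0 => /eqP ->.
apply: (iffP existsP) => [[u /andP[eau /IH [p [pp lp sp]]]]|[[|u p] [] //=]].
  by exists (u :: p); rewrite /= eau pp lp sp.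
move=> /andP[eau pp] lp [sp]; exists u; rewrite eau /=; apply/IH; by exists p.
Qed.

Lemma dist_le_mono (T : finType) (e : rel T) u w i j :
  dist_le e u w i -> i <= j -> dist_le e u w j.
Proof.
move=> /existsP[k hk] ij; apply/existsP.
have kj : k < j.+1 by apply: leq_trans (ltn_ord k) _.
by exists (Ordinal kj).
Qed.

Lemma dist_le_small (T : finType) (e : rel T) u w i :
  dist_le e u w i -> dist_le e u w #|T|.-1.
Proof.
move=> /existsP[k /walknP [p [pp lp _]]].
move: lp; case: (shortenP pp) => p' pp' up' _ lp'.
have hs : size p' < #|T|.
  have := max_card (mem (u :: p')); rewrite (card_uniqP up') //.
have hs' : size p' < (#|T|.-1).+1 by rewrite prednK // (leq_ltn_trans _ hs).
apply/existsP; exists (Ordinal hs'); apply/walknP; by exists p'.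
Qed.

Lemma dist_le_step (T : finType) (e : rel T) u x w i :
  e u x -> dist_le e x w i -> dist_le e u w i.+1.
Proof.
move=> eux /existsP[k hk]; apply/existsP.
have kj : k.+1 < i.+2 by rewrite ltnS.
exists (Ordinal kj) => /=; apply/existsP; exists x; by rewrite eux.
Qed.

Lemma walkn_perm (T : finType) (e : rel T) (f : {perm T}) :
  (forall x y, e (f x) (f y) = e x y) ->
  forall k a b, walkn e k (f a) (f b) = walkn e k a b.
Proof.
move=> hf; elim=> [|k IH] a b /=; first by rewrite (inj_eq perm_inj).
apply/existsP/existsP => [[u /andP[h1 h2]]|[u /andP[h1 h2]]].
  exists (f^-1 u)%g; rewrite -hf -IH !permKV h1 h2 //.
by exists (f u); rewrite hf IH h1 h2.
Qed.

Lemma dist_le_perm (T : finType) (e : rel T) (f : {perm T}) :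
  (forall x y, e (f x) (f y) = e x y) ->
  forall a b i, dist_le e (f a) (f b) i = dist_le e a b i.
Proof.
move=> hf a b i; apply/existsP/existsP => [[k hk]|[k hk]]; exists k.
  by rewrite -(@walkn_perm _ _ _ hf).
by rewrite (@walkn_perm _ _ _ hf).
Qed.
Local Open Scope ring_scope.

Lemma pow_half_step (m k : nat) : (m <= k.+1)%N -> (2%:R ^- k : rat) <= 2 * 2%:R ^- m.
Proof.
move=> h; rewrite -!exprVn.
have -> : (2%:R^-1 : rat) ^+ k = 2 * (2%:R^-1) ^+ k.+1.
  by rewrite exprSr mulrCA mulfV ?mulr1.
rewrite ler_pM2l //; apply: ler_wiXn2l => //.
Qed.

Definition phi (T : finType) (e : rel T) (u w : T) : rat :=
  \sum_(i < #|T|) 2%:R ^- i * (w \in Nset e u i)%:R.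

Lemma phi_ge0 (T : finType) (e : rel T) u w : 0 <= phi e u w.
Proof. by apply: sumr_ge0 => i _; rewrite mulr_ge0 // invr_ge0 exprn_ge0. Qed.

Lemma Nset_min (T : finType) (e : rel T) u w m i :
  (forall j, (j < m)%N -> ~~ dist_le e u w j) -> dist_le e u w m ->
  (w \in Nset e u i) = (i == m).
Proof.
move=> hmin hm; rewrite inE.
case: (ltngtP i m) => [im|mi|->].
- by rewrite (negbTE (hmin _ im)).
- case: i mi => [//|i] mi /=.
  have -> : dist_le e u w i by apply: (dist_le_mono hm); rewrite -ltnS.
  by rewrite andbF.

- rewrite hm /=; case: m hmin hm => [|m] hmin hm //.
  by rewrite hmin.
Qed.

Lemma phi_cases (T : finType) (e : rel T) u w :
  (exists m, [/\ dist_le e u w m, forall j, (j < m)%N -> ~~ dist_le e u w j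
      & phi e u w = 2%:R ^- m])
  \/ ((forall j, ~~ dist_le e u w j) /\ phi e u w = 0).
Proof.
case h: (dist_le e u w #|T|.-1).
  left; have ex : exists m, dist_le e u w m by exists #|T|.-1.
  case: (ex_minnP ex) => m hm hmin; exists m; split => //.
    by move=> j jm; apply/negP => hj; have := hmin _ hj; rewrite leqNgt jm.
  have mle : (m <= #|T|.-1)%N by apply: hmin.
  have nT : (0 < #|T|)%N by apply/card_gt0P; exists u.
  have mlt : (m < #|T|)%N by rewrite (leq_ltn_trans mle) // prednK.
  have hmin' : forall j, (j < m)%N -> ~~ dist_le e u w j.
    by move=> j jm; apply/negP => hj; have := hmin _ hj; rewrite leqNgt jm.
  rewrite /phi (bigD1 (Ordinal mlt)) //= big1 ?addr0.
    by rewrite (Nset_min _ hmin' hm) eqxx mulr1.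
  move=> i /negbTE hi; rewrite (Nset_min _ hmin' hm).
  have -> : (nat_of_ord i == m) = false.
    by apply/negbTE; apply: contraFN hi => /eqP him; apply/eqP/val_inj.
  by rewrite mulr0.
right; have hn : forall j, ~~ dist_le e u w j.
  by move=> j; apply/negP => /dist_le_small; rewrite h.
split => //; rewrite /phi big1 // => i _.
rewrite inE (negbTE (hn i)) /= mulr0 //.
Qed.

Lemma phi_step (T : finType) (e : rel T) u x w :
  e u x -> phi e x w <= 2 * phi e u w.
Proof.
move=> eux.
case: (phi_cases e x w) => [[m' [hm' _ ->]]|[_ ->]]; last first.
  by rewrite mulr_ge0 // phi_ge0.
have hu := dist_le_step eux hm'.
case: (phi_cases e u w) => [[m [hm hmin ->]]|[hn _]]; last by have := hn m'.+1; rewrite hu.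
apply: pow_half_step; rewrite leqNgt; apply/negP => /hmin; by rewrite hu.
Qed.

Lemma phi_self (T : finType) (e : rel T) w : phi e w w = 1.
Proof.
have h0 : dist_le e w w 0 by apply/existsP; exists ord0 => /=.
case: (phi_cases e w w) => [[m [hm hmin ->]]|[hn _]]; last by have := hn 0%N; rewrite h0.
case: m hm hmin => [//|m] _ hmin; by have := hmin 0%N isT; rewrite h0.
Qed.

Lemma phi_perm (T : finType) (e : rel T) (f : {perm T}) :
  (forall x y, e (f x) (f y) = e x y) ->
  forall a b, phi e (f a) (f b) = phi e a b.
Proof.
move=> hf a b; apply: eq_bigr => i _; rewrite /Nset !inE !(dist_le_perm hf).
by case: (nat_of_ord i) => // j; rewrite (dist_le_perm hf).
Qed.

Lemma sum_phi (T : finType) (e : rel T) u : \sum_w phi e u w = ef e u.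
Proof.
rewrite /phi exchange_big /ef; apply: eq_bigr => i _.
rewrite -mulr_sumr; congr (_ * _).
rewrite -sum1_card natr_sum [RHS]big_mkcond /=; apply: eq_bigr => w _.
by case: (w \in _).
Qed.

Definition pot (T : finType) (e : rel T) (P : pdist T) (w : T) : rat :=
  \sum_u (P u)%:R * phi e u w.

Lemma sum_delta (T : finType) (u : T) (F : T -> rat) :
  \sum_y (y == u)%:R * F y = F u.
Proof.
rewrite (bigD1 u) //= eqxx mul1r big1 ?addr0 // => y /negbTE ->; by rewrite mul0r.
Qed.

Lemma pot_move (T : finType) (e : rel T) P Q w :
  simple_graph e -> pmove e P Q -> pot e Q w <= pot e P w.
Proof.
move=> [_ irr] [u [x [eux h2 ->]]].
have ux : (u == x) = false by apply/negbTE; apply: contraTN eux => /eqP ->; rewrite irr.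
have E : forall y, (([ffun z => if z == u then (P z - 2)%N
                   else if z == x then (P z).+1 else P z] : pdist T) y)%:R
                   + 2 * (y == u)%:R = (P y)%:R + (y == x)%:R :> rat.
  move=> y; rewrite ffunE -natrM -!natrD; congr (_%:R).
  case: (eqVneq y u) => [->|yu]; first by rewrite ux muln1 addn0 subnK.
  rewrite muln0 addn0; case: (eqVneq y x) => _ /=; [exact: (esym (addn1 _)) | exact: (esym (addn0 _))].
have key : pot e [ffun z => if z == u then (P z - 2)%N
                   else if z == x then (P z).+1 else P z] w + 2 * phi e u w
           = pot e P w + phi e x w.
  rewrite -(sum_delta u (phi e ^~ w)) -(sum_delta x (phi e ^~ w)) mulr_sumr /pot.
  rewrite -!big_split /=; apply: eq_bigr => z0 _.
  by rewrite mulrA -mulrDl E mulrDl.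
have := phi_step w eux; lra.
Qed.

Lemma pot_reaches (T : finType) (e : rel T) P Q w :
  simple_graph e -> preaches e P Q -> pot e Q w <= pot e P w.
Proof.
move=> sg; elim=> [P1 Q1 h|P1|P1 Q1 R1 _ h1 _ h2].
- exact: pot_move.
- by [].
- exact: le_trans h2 h1.
Qed.

Lemma pot_ge (T : finType) (e : rel T) (Q : pdist T) w : (Q w)%:R <= pot e Q w.
Proof.
rewrite /pot (bigD1 w) //= phi_self mulr1 lerDl.
by apply: sumr_ge0 => u _; rewrite mulr_ge0 // phi_ge0.
Qed.

Lemma pot_ge0 (T : finType) (e : rel T) (Q : pdist T) w : 0 <= pot e Q w.
Proof. by apply: sumr_ge0 => u _; rewrite mulr_ge0 // phi_ge0. Qed.

Lemma kreach_le (T : finType) (e : rel T) P w k :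
  simple_graph e -> kreachable e P w k -> k%:R <= pot e P w.
Proof.
move=> sg [Q [hPQ hk]]; apply: le_trans (pot_reaches w sg hPQ).
apply: le_trans (pot_ge e Q w); by rewrite ler_nat.
Qed.

Lemma pdecP (A : Prop) : pdec A -> A.
Proof. by rewrite /pdec; case: excluded_middle_informative. Qed.

Lemma reach_le (T : finType) (e : rel T) P w :
  simple_graph e -> (reach e P w)%:R <= pot e P w.
Proof.
move=> sg; rewrite /reach.
apply: (big_ind (fun n : nat => n%:R <= pot e P w)).
- exact: pot_ge0.
- move=> a b ha hb; rewrite /maxn; by case: ifP.
- move=> k /pdecP hk; exact: kreach_le.
Qed.

Lemma one_exc (T : finType) (e : rel T) P w :
  simple_graph e -> reachable e P w -> (1 + exc e P w)%:R <= pot e P w.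
Proof.
move=> sg hr; rewrite /exc /pdec.
case: (excluded_middle_informative (reachable e P w)) => _ /=; last first.
  by rewrite addn0; exact: kreach_le hr.
have := reach_le P w sg; case: (reach e P w) => [_|r hr'] /=.
  by rewrite addn0; exact: kreach_le hr.
by rewrite add1n.
Qed.

Lemma ef_sum (T : finType) (e : rel T) v u :
  vertex_transitive e -> ef e u = ef e v.
Proof.
move=> vt; have [f [hf fv]] := vt v u.
rewrite -!sum_phi -fv (reindex_inj (@perm_inj _ f)) /=.
by apply: eq_bigr => w _; rewrite phi_perm.
Qed.

Lemma ef_gt0 (T : finType) (e : rel T) v : 0 < ef e v.
Proof.
rewrite -sum_phi (bigD1 v) //= phi_self.
apply: (lt_le_trans ltr01); rewrite lerDl.
by apply: sumr_ge0 => u _; exact: phi_ge0.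
Qed.

Unset Implicit Arguments.

Theorem corollary2p2 (T : finType) (e : rel T) (v : T) (P : pdist T) :
  simple_graph e -> vertex_transitive e -> solvable e P ->
  ((#|T|%:R + (TE e P)%:R) / ef e v <= (psize P)%:R :> rat)%R.
Proof.
move=> sg vt sv; rewrite ler_pdivrMr ?ef_gt0 //.
have -> : (#|T|%:R + (TE e P)%:R : rat) = \sum_w (1 + exc e P w)%:R.
  rewrite -natrD /TE -sum1_card -big_split natr_sum /=.
  by apply: eq_bigr.
apply: le_trans (_ : \sum_w pot e P w <= _).
  by apply: ler_sum => w _; apply: one_exc.
rewrite /pot exchange_big /psize natr_sum mulr_suml.
rewrite le_eqVlt; apply/orP; left; apply/eqP; apply: eq_bigr => u _.
by rewrite -mulr_sumr sum_phi (ef_sum v u vt).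
Qed.
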